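(* Let $\mathcal D$ be a finite family of $\sigma$-structures. Then the family $\mathcal O_{\mathcal D}$ of $\sigma$-forests which do not admit a homomorphism to any structure in $\mathcal D$ is regular.
   Context: Fix a type $\sigma$ (finite set of relation symbols with arities); $\sigma$-structures are finite sets with an $r$-ary relation per symbol of arity $r$; homomorphisms are relation-preserving maps. $\mathrm{Inc}(\mathbf A)$ is the bipartite multigraph with parts $V(\mathbf A)$ and the blocks $(R,(x_1,\dots,x_r))$, $(x_1,\dots,x_r)\in R(\mathbf A)$, with one edge joining $x_i$ to the block for each $i$; $\mathbf A$ is a $\sigma$-forest if $\mathrm{Inc}(\mathbf A)$ has no cycles or parallel edges. $\mathbb F$ is the set of isomorphism classes of $\sigma$-forests, $\mathbb F_{\mathrm r}$ that of rooted $\sigma$-forests. $(\mathbf A,a)+(\mathbf B,b)$: disjoint union with $a,b$ identified as new root; $[(\mathbf A,a)]$ forgets the root. $\mathcal O\subseteq\mathbb F$ is regular if there are only finitely many distinct sets $\mathcal O-(\mathbf A,a)=\{(\mathbf B,b)\in\mathbb F_{\mathrm r}:[(\mathbf A,a)+(\mathbf B,b)]\in\mathcal O\}$, $(\mathbf A,a)\in\mathbb F_{\mathrm r}$. *)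

(* Defs.v *)
From mathcomp Require Import all_boot.
Set Implicit Arguments. Unset Strict Implicit. Unset Printing Implicit Defensive.

Record signature := Signature { sym : finType; arity : sym -> nat }.

Record sstruct (sg : signature) := SStruct {
  carrier :> finType;
  relof : forall s : sym sg, {set (arity s).-tuple carrier} }.

Section Struct.
Variable sg : signature.

Definition hom_to (A B : sstruct sg) : Prop :=
  exists f : A -> B, forall (s : sym sg) (t : (arity s).-tuple A),
    t \in relof A s -> map_tuple f t \in relof B s.

(* Blocks of A: pairs (R, tuple); those with the tuple in R(A) are the blocks
   of Inc(A). *)
Definition block (A : sstruct sg) := {s : sym sg & (arity s).-tuple A}.

Definition is_block (A : sstruct sg) (b : block A) : bool :=
  tagged b \in relof A (tag b).

Definition inc_node (A : sstruct sg) := (A + block A)%type.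

(* adjacency in Inc(A) (x_i joined to block for each i; without parallel
   edges this is membership of x in the tuple). *)
Definition inc_adj (A : sstruct sg) : rel (inc_node A) :=
  fun u v => match u, v with
  | inl x, inr b => is_block b && (x \in val (tagged b))
  | inr b, inl x => is_block b && (x \in val (tagged b))
  | _, _ => false
  end.

(* Inc(A) has no parallel edges: no tuple in a relation repeats an entry. *)
Definition no_parallel_edges (A : sstruct sg) : Prop :=
  forall (s : sym sg) (t : (arity s).-tuple A), t \in relof A s -> uniq t.

(* Inc(A) has no cycles (of length >= 3; length-2 cycles are parallel edges). *)
Definition inc_acyclic (A : sstruct sg) : Prop :=
  forall p : seq (inc_node A), uniq p -> 2 < size p -> ~~ cycle (@inc_adj A) p.

Definition forest (A : sstruct sg) : Prop := no_parallel_edges A /\ inc_acyclic A.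

Record rstruct := RStruct { rs :> sstruct sg; root : rs }.

(* (A,a) + (B,b): disjoint union with a and b identified (the new root). *)
Definition sum_carrier (A B : rstruct) : finType :=
  (rs A + {y : rs B | y != root B})%type.

Definition sum_inl (A B : rstruct) (x : rs A) : sum_carrier A B := inl x.

Definition sum_inr (A B : rstruct) (y : rs B) : sum_carrier A B :=
  match insub y with Some y' => inr y' | None => inl (root A) end.

Definition sum_struct (A B : rstruct) : sstruct sg :=
  @SStruct sg (sum_carrier A B) (fun s =>
    (map_tuple (@sum_inl A B) @: relof (rs A) s) :|:
    (map_tuple (@sum_inr A B) @: relof (rs B) s)).

Definition sum_rooted (A B : rstruct) : rstruct :=
  @RStruct (sum_struct A B) (inl (root A)).

Definition unroot (A : rstruct) : sstruct sg := rs A.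

(* Regularity of a family O of forests (given as an isomorphism-invariant
   predicate): only finitely many distinct sets
   O - (A,a) = {(B,b) rooted forest : [(A,a)+(B,b)] in O}, (A,a) a rooted forest.
   Sets of (iso classes of) rooted forests are represented by predicates,
   compared on rooted forests. *)
Definition regular (O : sstruct sg -> Prop) : Prop :=
  exists (n : nat) (P : 'I_n -> rstruct -> Prop),
    forall A : rstruct, forest (rs A) ->
      exists i : 'I_n, forall B : rstruct, forest (rs B) ->
        (P i B <-> O (unroot (sum_rooted A B))).

Definition O_fam (k : nat) (D : 'I_k -> sstruct sg) (A : sstruct sg) : Prop :=
  forest A /\ forall j : 'I_k, ~ hom_to A (D j).

End Struct.

(* Main.v *)
Require Import Defs.
From mathcomp Require Import all_boot.
Set Implicit Arguments. Unset Strict Implicit. Unset Printing Implicit Defensive.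

Definition projA {sg} (A B : rstruct sg) (z : sum_carrier A B) : rs A :=
  match z with inl x => x | inr _ => Defs.root A end.
Definition projB {sg} (A B : rstruct sg) (z : sum_carrier A B) : rs B :=
  match z with inl _ => Defs.root B | inr y => val y end.

Lemma projA_inl {sg} (A B : rstruct sg) x : projA (@sum_inl _ A B x) = x.
Proof. by []. Qed.

Lemma projB_inr {sg} (A B : rstruct sg) y : projB (@sum_inr _ A B y) = y.
Proof.
rewrite /sum_inr; case: insubP => [y' _ <-|] //=.
by rewrite negbK => /eqP ->.
Qed.

Lemma sum_inr_inj {sg} (A B : rstruct sg) : injective (@sum_inr _ A B).
Proof. exact: can_inj (@projB_inr _ A B). Qed.

Lemma sum_inr_projB {sg} (A B : rstruct sg) (z : sum_carrier A B) :
  (if z is inl x then x == Defs.root A else true) -> @sum_inr _ A B (projB z) = z.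
Proof.
case: z => [x /eqP -> | y _] /=.
  by rewrite /sum_inr insubF //= eqxx.
by rewrite /sum_inr insubT ?(valP y) //= => H; congr inr; apply: val_inj.
Qed.

Notation SB A B := (sum_struct A B).

Definition hAb {sg} (A B : rstruct sg) (b : block (SB A B)) : block A :=
  existT _ (tag b) (map_tuple (@projA _ A B) (tagged b)).
Definition gAb {sg} (A B : rstruct sg) (b : block A) : block (SB A B) :=
  existT _ (tag b) (map_tuple (@sum_inl _ A B) (tagged b)).
Definition hBb {sg} (A B : rstruct sg) (b : block (SB A B)) : block B :=
  existT _ (tag b) (map_tuple (@projB _ A B) (tagged b)).
Definition gBb {sg} (A B : rstruct sg) (b : block B) : block (SB A B) :=
  existT _ (tag b) (map_tuple (@sum_inr _ A B) (tagged b)).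

Definition hA {sg} (A B : rstruct sg) (u : inc_node (SB A B)) : inc_node A :=
  match u with inl z => inl (projA z) | inr b => inr (hAb b) end.
Definition hB {sg} (A B : rstruct sg) (u : inc_node (SB A B)) : inc_node B :=
  match u with inl z => inl (projB z) | inr b => inr (hBb b) end.
Definition gA {sg} (A B : rstruct sg) (u : inc_node A) : inc_node (SB A B) :=
  match u with inl z => inl (sum_inl B z) | inr b => inr (gAb B b) end.
Definition gB {sg} (A B : rstruct sg) (u : inc_node B) : inc_node (SB A B) :=
  match u with inl z => inl (@sum_inr _ A B z) | inr b => inr (gBb A b) end.

Definition isLb {sg} (A B : rstruct sg) (b : block (SB A B)) :=
  (gAb B (hAb b) == b) && is_block (hAb b).
Definition isRb {sg} (A B : rstruct sg) (b : block (SB A B)) :=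
  (gBb A (hBb b) == b) && is_block (hBb b).

Definition isL {sg} (A B : rstruct sg) (u : inc_node (SB A B)) : bool :=
  match u with inl (inl _) => true | inl (inr _) => false | inr b => isLb b end.

Lemma blockLR {sg} (A B : rstruct sg) (b : block (SB A B)) :
  is_block b -> isLb b || isRb b.
Proof.
case: b => s t; rewrite /is_block /= inE => /orP [] /imsetP [t0 Ht0 ->].
  apply/orP; left; rewrite /isLb /hAb /gAb /=.
  have -> : map_tuple (@projA _ A B) (map_tuple (sum_inl B) t0) = t0.
    by apply: val_inj => /=; rewrite -map_comp map_id.
  by rewrite eqxx.
apply/orP; right; rewrite /isRb /hBb /gBb /=.
have -> : map_tuple (@projB _ A B) (map_tuple (@sum_inr _ A B) t0) = t0.
  apply: val_inj => /=; rewrite -map_comp (eq_map (@projB_inr _ A B)) map_id //.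
by rewrite eqxx.
Qed.

Lemma isLb_val {sg} (A B : rstruct sg) (b : block (SB A B)) :
  isLb b -> val (tagged b) = map (sum_inl B) (val (tagged (hAb b))) /\ is_block (hAb b).
Proof.
case: b => s t /andP [/eqP H Hb]; split => //.
by have := eq_from_Tagged H; move=> /(congr1 val) E; exact: esym E.
Qed.

Lemma isRb_val {sg} (A B : rstruct sg) (b : block (SB A B)) :
  isRb b -> val (tagged b) = map (@sum_inr _ A B) (val (tagged (hBb b))) /\ is_block (hBb b).
Proof.
case: b => s t /andP [/eqP H Hb]; split => //.
by have := eq_from_Tagged H; move=> /(congr1 val) E; exact: esym E.
Qed.

Lemma sum_inr_inl {sg} (A B : rstruct sg) w x : @sum_inr _ A B w = inl x -> x = Defs.root A.
Proof. by rewrite /sum_inr; case: insubP => [? _ _|_] // [<-]. Qed.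

Definition rnode {sg} (A B : rstruct sg) : inc_node (SB A B) := inl (inl (Defs.root A)).

Lemma adj_lab {sg} (A B : rstruct sg) (u v : inc_node (SB A B)) :
  inc_adj u v -> u != rnode A B -> v != rnode A B -> isL u = isL v.
Proof.
have key : forall (z : sum_carrier A B) (b : block (SB A B)),
    is_block b -> z \in val (tagged b) -> inl z != rnode A B -> isL (inl z) = isLb b.
  move=> z b Hb Hz Hr; case: z Hz Hr => [x|y] Hz Hr /=.
    have [//|] := boolP (isLb b) => HL.
    move: (blockLR Hb); rewrite (negbTE HL) /= => /isRb_val [E _].
    move: Hz; rewrite E => /mapP [w _ /esym /sum_inr_inl Ex].
    by rewrite /rnode Ex eqxx in Hr.
  have [HL|//] := boolP (isLb b).
  move: Hz; have [E _] := isLb_val HL; rewrite E => /mapP [w _] //.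
case: u => [z|b]; case: v => [z'|b'] //= /andP [Hb Hz] H1 H2.
  exact: key.
by symmetry; exact: key.
Qed.

Lemma adj_hA {sg} (A B : rstruct sg) (u v : inc_node (SB A B)) :
  isL u -> isL v -> inc_adj u v -> inc_adj (hA u) (hA v).
Proof.
have key : forall x (b : block (SB A B)), isLb b ->
    inl x \in val (tagged b) -> is_block (hAb b) && (x \in val (tagged (hAb b))).
  move=> x b /isLb_val [E ->]; rewrite E mem_map //.
  by move=> ? ? [].
case: u => [[x|y]|b]; case: v => [[x'|y']|b'] //=.
  by move=> _ H /andP [_ Hz]; exact: key.
by move=> H _ /andP [_ Hz]; exact: key.
Qed.

Lemma gA_hA {sg} (A B : rstruct sg) (u : inc_node (SB A B)) : isL u -> gA B (hA u) = u.
Proof. by case: u => [[x|y]|b] //= /andP [/eqP -> _]. Qed.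

Definition PR {sg} (A B : rstruct sg) (u : inc_node (SB A B)) : bool :=
  match u with inl z => (if z is inl x then x == Defs.root A else true)
  | inr b => isRb b end.

Lemma adj_hB {sg} (A B : rstruct sg) (u v : inc_node (SB A B)) :
  PR u -> PR v -> inc_adj u v -> inc_adj (hB u) (hB v).
Proof.
have key : forall z (b : block (SB A B)), isRb b ->
    z \in val (tagged b) -> is_block (hBb b) && (projB z \in val (tagged (hBb b))).
  move=> z b /isRb_val [E ->]; rewrite E => /mapP [w Hw ->].
  by rewrite projB_inr.
case: u => [z|b]; case: v => [z'|b'] //=.
  by move=> _ H /andP [_ Hz]; exact: key.
by move=> H _ /andP [_ Hz]; exact: key.
Qed.

Lemma gB_hB {sg} (A B : rstruct sg) (u : inc_node (SB A B)) : PR u -> gB A (hB u) = u.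
Proof.
case: u => [z|b] /=; first by move=> H; rewrite sum_inr_projB.
by move=> /andP [/eqP -> _].
Qed.

Lemma path_map_in (T T' : Type) (e : rel T) (e' : rel T') (h : T -> T') (P : pred T) :
  (forall u v, P u -> P v -> e u v -> e' (h u) (h v)) ->
  forall x s, all P (x :: s) -> path e x s -> path e' (h x) (map h s).
Proof.
move=> He x s; elim: s x => [//|y s IH] x /= /and3P [Px Py Ps] /andP [Exy Hp].
rewrite He //=; apply: IH => //=; by rewrite Py.
Qed.

Lemma cycle_map_in (T T' : Type) (e : rel T) (e' : rel T') (h : T -> T') (P : pred T) :
  (forall u v, P u -> P v -> e u v -> e' (h u) (h v)) ->
  forall p, all P p -> cycle e p -> cycle e' (map h p).
Proof.
move=> He [//|x s] HP; rewrite /= -map_rcons; apply: (path_map_in He).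
move: HP; rewrite /= all_rcons => /andP [-> ->]; by rewrite andbT.
Qed.

Lemma const_lab {sg} (A B : rstruct sg) (x : inc_node (SB A B)) q :
  path (@inc_adj _ _) x q -> all (fun y => y != rnode A B) (x :: q) ->
  all (fun y => isL y == isL x) q.
Proof.
elim: q x => [//|y q IH] x /andP [Hxy Hp] /and3P [Hx Hy Hq].
have E := adj_lab Hxy Hx Hy.
have /allP H : all (fun z => isL z == isL y) q.
  by apply: IH => //; apply/andP.
apply/andP; split; first by rewrite E.
apply/allP => z /H; by rewrite E.
Qed.

Lemma cycL {sg} (A B : rstruct sg) (p : seq (inc_node (SB A B))) :
  inc_acyclic A -> uniq p -> 2 < size p -> cycle (@inc_adj _ _) p -> all (@isL _ A B) p -> False.
Proof.
move=> Hac Hu Hs Hc /allP HL.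
have inj : {in p &, injective (@hA _ A B)}.
  apply: (can_in_inj (g := gA B)) => u /HL; exact: gA_hA.
move: (Hac (map (@hA _ A B) p)); rewrite map_inj_in_uniq // size_map => /(_ Hu Hs).
rewrite (cycle_map_in (@adj_hA _ A B)) //; exact/allP.
Qed.

Lemma cycR {sg} (A B : rstruct sg) (p : seq (inc_node (SB A B))) :
  inc_acyclic B -> uniq p -> 2 < size p -> cycle (@inc_adj _ _) p ->
  all (fun u => (u == rnode A B) || ~~ isL u) p -> False.
Proof.
move=> Hac Hu Hs Hc /allP HR.
have HP : forall u, u \in p -> PR u.
  move=> u Hup; case/orP: (HR u Hup) => [/eqP -> /=|]; first by rewrite eqxx.
  case: u Hup => [[x|y]|b] //= Hup HL.
  have := next_cycle Hc Hup; case: (next p (inr b)) => [z|//] /andP [Hb _].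
  by move: (blockLR Hb); rewrite (negbTE HL).
have inj : {in p &, injective (@hB _ A B)}.
  apply: (@can_in_inj _ _ _ _ (@gB _ A B)) => u /HP; exact: gB_hB.
move: (Hac (map (@hB _ A B) p)); rewrite map_inj_in_uniq // size_map => /(_ Hu Hs).
rewrite (cycle_map_in (@adj_hB _ A B)) //; exact/allP.
Qed.

Lemma forest_sum {sg} (A B : rstruct sg) :
  forest (rs A) -> forest (rs B) -> forest (SB A B).
Proof.
move=> [npA acA] [npB acB]; split.
  move=> s t; rewrite /= inE => /orP [] /imsetP [t0 Ht0 ->] /=.
    rewrite map_inj_uniq; [exact: npA | by move=> ? ? [] ].
  rewrite map_inj_uniq; [exact: npB | exact: sum_inr_inj].
move=> p Hu Hs; apply/negP => Hc.
set r := rnode A B.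
have main : forall x q, path (@inc_adj _ _) x q -> all (fun y => y != r) (x :: q) ->
    ~~ isL x -> all (fun u => (u == r) || ~~ isL u) (x :: q).
  move=> x q Hp Hr Hx; have /allP H := const_lab Hp Hr.
  apply/allP => z; rewrite inE => /orP [/eqP ->|/H /eqP ->]; by rewrite Hx orbT.
have mainL : forall x q, path (@inc_adj _ _) x q -> all (fun y => y != r) (x :: q) ->
    isL x -> all (@isL _ A B) (x :: q).
  move=> x q Hp Hr Hx; have /allP H := const_lab Hp Hr.
  apply/allP => z; rewrite inE => /orP [/eqP ->|/H /eqP ->] //.
have [rp|rnp] := boolP (r \in p).
  case: (rot_to rp) => i s' E.
  have Hu' : uniq (r :: s') by rewrite -E rot_uniq.
  have Hs' : 2 < size (r :: s') by rewrite -E size_rot.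
  have Hc' : cycle (@inc_adj _ _) (r :: s') by rewrite -E rot_cycle.
  case: s' E Hu' Hs' Hc' => [//|x q] E Hu' Hs' Hc'.
  move: (Hc') => /= /andP [_]; rewrite rcons_path => /andP [Hp _].
  have Hr : all (fun y => y != r) (x :: q).
    apply/allP => z Hz; apply/eqP => Ez; move: Hu'; rewrite /= -Ez Hz //.
  have [Hx|Hx] := boolP (isL x).
    apply: (@cycL _ A B (r :: x :: q) acA Hu' Hs' Hc').
    apply/andP; split => //; exact: mainL.
  apply: (@cycR _ A B (r :: x :: q) acB Hu' Hs' Hc').
  apply/andP; split; [by rewrite eqxx | exact: main].
case: p Hu Hs Hc rnp => [//|x q] Hu Hs Hc rnp.
move: (Hc) => /=; rewrite rcons_path => /andP [Hp _].
have Hr : all (fun y => y != r) (x :: q).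
  apply/allP => z Hz; apply/eqP => Ez; by move: rnp; rewrite -Ez Hz.
have [Hx|Hx] := boolP (isL x).
  apply: (@cycL _ A B (x :: q) acA Hu Hs Hc).
  exact: mainL.
apply: (@cycR _ A B (x :: q) acB Hu Hs Hc).
exact: main.
Qed.

Definition rh {sg} (A : rstruct sg) (E : sstruct sg) (d : E) : bool :=
  [exists f : {ffun rs A -> E}, (f (Defs.root A) == d) &&
    [forall s : sym sg, forall t : (arity s).-tuple (rs A),
       (t \in relof (rs A) s) ==> (map_tuple f t \in relof E s)]].

Lemma rhP {sg} (A : rstruct sg) (E : sstruct sg) (d : E) :
  reflect (exists f : rs A -> E, f (Defs.root A) = d /\
    forall s (t : (arity s).-tuple (rs A)), t \in relof (rs A) s -> map_tuple f t \in relof E s)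
    (rh A d).
Proof.
apply: (iffP existsP) => [[f /andP [/eqP Hd /forallP H]]|[f [Hd H]]].
  exists f; split => // s t Ht; by move/forallP: (H s) => /(_ t) /implyP /(_ Ht).
exists (finfun f); rewrite ffunE Hd eqxx /=; apply/forallP => s; apply/forallP => t.
apply/implyP => Ht.
have -> : map_tuple (finfun f) t = map_tuple f t.
  by apply: val_inj => /=; apply: eq_map => z; rewrite ffunE.
exact: H.
Qed.

Lemma hom_sum {sg} (A B : rstruct sg) (E : sstruct sg) :
  hom_to (SB A B) E <-> exists d : E, rh A d && rh B d.
Proof.
split.
  move=> [f Hf]; exists (f (inl (Defs.root A))); apply/andP; split; apply/rhP.
    exists (fun x => f (sum_inl B x)); split => // s t Ht.
    have := Hf s (map_tuple (sum_inl B) t).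
    rewrite /= inE imset_f //= => /(_ isT).
    have -> // : map_tuple f (map_tuple (sum_inl B) t) = map_tuple (fun x => f (sum_inl B x)) t.
    by apply: val_inj => /=; rewrite -map_comp.
  exists (fun y => f (@sum_inr _ A B y)); split.
    by rewrite /sum_inr insubF //= eqxx.
  move=> s t Ht.
  have := Hf s (map_tuple (@sum_inr _ A B) t).
  rewrite /= inE [X in _ || X]imset_f ?orbT //= => /(_ isT).
  have -> // : map_tuple f (map_tuple (@sum_inr _ A B) t) = map_tuple (fun x => f (@sum_inr _ A B x)) t.
  by apply: val_inj => /=; rewrite -map_comp.
move=> [d /andP [/rhP [fA [HA HfA]] /rhP [fB [HB HfB]]]].
pose f (z : sum_carrier A B) : E := match z with inl x => fA x | inr y => fB (val y) end.
have fr : forall y, f (@sum_inr _ A B y) = fB y.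
  move=> y; rewrite /sum_inr; case: insubP => [y' _ <-|] //=.
  by rewrite negbK => /eqP ->; rewrite HA HB.
exists f => s t; rewrite /= inE => /orP [] /imsetP [t0 Ht0 ->].
  have -> : map_tuple f (map_tuple (sum_inl B) t0) = map_tuple fA t0.
    by apply: val_inj => /=; rewrite -map_comp.
  exact: HfA.
have -> : map_tuple f (map_tuple (@sum_inr _ A B) t0) = map_tuple fB t0.
  by apply: val_inj => /=; rewrite -map_comp (eq_map fr).
exact: HfB.
Qed.

Theorem corollary3p4 (sg : signature) (k : nat) (D : 'I_k -> sstruct sg) :
  regular (O_fam D).
Proof.
pose T := {set {j : 'I_k & carrier (D j)}}.
pose ty (A : rstruct sg) : T := [set p | rh A (tagged p)].
exists #|{: T}|, (fun i B => forall p, p \in (enum_val i : T) -> ~~ rh B (tagged p)).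
move=> A fA; exists (enum_rank (ty A)) => B fB; rewrite enum_rankK.
split.
  move=> H; split; first exact: forest_sum.
  move=> j /hom_sum [d /andP [HA HB]].
  have := H (Tagged (fun j => carrier (D j)) d); rewrite inE /= HA HB.
  by move=> /(_ isT).
move=> [_ H] p; rewrite inE => HA; apply/negP => HB.
by apply: (H (tag p)); apply/hom_sum; exists (tagged p); rewrite HA HB.
Qed.
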